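(* Let $\varPsi_{p,n}:=\varPsi_{p,n}(0)$ and $\vec\eta_{p,n}:=\vec e(\varPsi_{p,n})$ for $p\le n$. Then: (i) for all $p\le n$, $|\varPsi_{p,n}|=S^+_{p,n}$; (ii) for all $p<n<q$: almost surely on the event $\{\min_{h\in[p,q]}S_h=\min_{h\in[n,q]}S_h\}$ one has $\vec\eta_{p,q}=\vec\eta_{n,q}$; and almost surely on the event $\{\min_{h\in[p,n]}S_h=\min_{h\in[p,q]}S_h\}\cap\{S^+_{p,j}>0\ \forall j\in[n,q]\}$ one has $\vec\eta_{p,n}=\vec\eta_{p,q}$; (iii) with $T_{p,x}=\inf\{q\ge p:S_q-S_p=-|x|\}$, for all $p\le n$ and $x\in G_{\mathbb N}$, $$\varPsi_{p,n}(x)=(x+\vec e(x)S_{p,n})1_{\{n\le T_{p,x}\}}+\varPsi_{p,n}1_{\{n>T_{p,x}\}},$$ $$K_{p,n}(x)=E[\delta_{\varPsi_{p,n}(x)}\mid\sigma(S)]=\delta_{x+\vec e(x)S_{p,n}}1_{\{n\le T_{p,x}\}}+\sum_{i=1}^N\alpha_i\delta_{S^+_{p,n}\vec e_i}1_{\{n>T_{p,x}\}}.$$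
   Context: Fix $N\in\mathbb N^*$ and $\alpha_1,\dots,\alpha_N>0$ with $\sum_{i=1}^N\alpha_i=1$. $G$ is the graph consisting of $N$ half-lines $D_i=\{h\vec e_i:h\ge0\}$ emanating from $0$ ($\vec e_i$ distinct unit vectors), with metric $d(h\vec e_i,h'\vec e_j)=h+h'$ if $i\ne j$, $|h-h'|$ if $i=j$; $|x|:=d(x,0)$. Define $\vec e(z)=\vec e_i$ if $z\in D_i\setminus\{0\}$ and $\vec e(0)=\vec e_N$. $G_{\mathbb N}=\{x\in G:|x|\in\mathbb N\}$. $S=(S_n)_{n\in\mathbb Z}$ is a simple random walk on $\mathbb Z$ indexed by $\mathbb Z$ ($S_0=0$, $(S_n)_{n\ge0}$ and $(S_{-n})_{n\ge0}$ independent simple random walks), and $(\vec\eta_i)_{i\in\mathbb Z}$ is an i.i.d. sequence with law $\sum_i\alpha_i\delta_{\vec e_i}$, independent of $S$. For $p\le n$, $S_{p,n}=S_n-S_p$, $S^+_{p,n}=S_n-\min_{h\in[p,n]}S_h$. For $x\in G_{\mathbb N}$: $\varPsi_{p,p+1}(x)=x+\vec e(x)S_{p,p+1}$ if $x\ne0$, $\varPsi_{p,p+1}(0)=\vec\eta_pS^+_{p,p+1}$; $K_{p,p+1}(x)=\delta_{x+\vec e(x)S_{p,p+1}}$ if $x\ne0$, $K_{p,p+1}(0)=\sum_i\alpha_i\delta_{S^+_{p,p+1}\vec e_i}$. For $p<n$: $\varPsi_{p,n}=\varPsi_{n-1,n}\circ\cdots\circ\varPsi_{p,p+1}$, $K_{p,n}=K_{p,p+1}K_{p+1,p+2}\cdots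 K_{n-1,n}$ (with $KK'(x,A)=\sum_yK'(y,A)K(x,\{y\})$); $\varPsi_{p,p}(x)=x$, $K_{p,p}(x)=\delta_x$. *)

(* Defs.v *)
(* Star graph G with N = n0.+1 half-lines, random walk S,
   direction sequence eta; everything is stated pathwise. *)
From HB Require Import structures.
From mathcomp Require Import all_boot all_order all_algebra.
Set Implicit Arguments. Unset Strict Implicit. Unset Printing Implicit Defensive.
Import Order.TTheory GRing.Theory Num.Theory.
Local Open Scope ring_scope.

Section Star.
Variable n0 : nat.  (* N = n0.+1 ; direction e_i <-> i : 'I_N, e_N <-> ord_max *)

(* Points of G_N : None = origin, Some (i, h) = (h+1) e_i. *)
Definition gpt := option ('I_n0.+1 * nat).

Definition gabs (x : gpt) : nat := if x is Some (_, h) then h.+1 else 0%N.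

(* \vec e(x) ; \vec e(0) = \vec e_N *)
Definition edir (x : gpt) : 'I_n0.+1 := if x is Some (i, _) then i else ord_max.

Definition gmk (i : 'I_n0.+1) (h : nat) : gpt :=
  if h is h'.+1 then Some (i, h') else None.

(* x + \vec e(x) s  (only used when |x| + s >= 0; truncated at 0 otherwise) *)
Definition gshift (x : gpt) (s : int) : gpt :=
  match (gabs x)%:Z + s with Posz m => gmk (edir x) m | Negz _ => None end.

Definition smin (S : int -> int) (p q : int) : int :=
  \big[Num.min/S p]_(i < (absz (q - p)).+1) S (p + i%:Z).

Definition Splus (S : int -> int) (p q : int) : int := S q - smin S p q.

(* one-step flow \varPsi_{p,p+1} ; eta p is the index of \vec\eta_p *)
Definition Psi1 (S : int -> int) (eta : int -> 'I_n0.+1) (p : int) (x : gpt) : gpt :=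
  if x is None then gmk (eta p) (absz (Splus S p (p + 1)))
  else gshift x (S (p + 1) - S p).

Fixpoint PsiK (S : int -> int) (eta : int -> 'I_n0.+1) (p : int) (k : nat) (x : gpt) : gpt :=
  if k is k'.+1 then Psi1 S eta (p + k'%:Z) (PsiK S eta p k' x) else x.

Definition Psi S eta (p q : int) (x : gpt) : gpt := PsiK S eta p (absz (q - p)) x.

Definition Psi0 S eta (p q : int) : gpt := Psi S eta p q None.
Definition etapq S eta (p q : int) : 'I_n0.+1 := edir (Psi0 S eta p q).

(* Finitely supported measures on G_N as lists of weighted atoms. *)
Variable R : realFieldType.
Definition meas := seq (R * gpt).
Definition mass (m : meas) (y : gpt) : R := \sum_(a <- m | a.2 == y) a.1.

(* (mu K)(.) = sum_y mu({y}) K(y, .) *)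
Definition mbind (m : meas) (K : gpt -> meas) : meas :=
  flatten [seq [seq (a.1 * b.1, b.2) | b <- K a.2] | a <- m].

Definition K1 (alpha : 'I_n0.+1 -> R) (S : int -> int) (p : int) (x : gpt) : meas :=
  if x is None then [seq (alpha i, gmk i (absz (Splus S p (p + 1)))) | i <- enum 'I_n0.+1]
  else [:: (1, gshift x (S (p + 1) - S p))].

Fixpoint KK (alpha : 'I_n0.+1 -> R) (S : int -> int) (p : int) (k : nat) (x : gpt) : meas :=
  if k is k'.+1 then mbind (KK alpha S p k' x) (K1 alpha S (p + k'%:Z))
  else [:: (1, x)].

Definition Kpq alpha S (p q : int) (x : gpt) : meas := KK alpha S p (absz (q - p)) x.

Definition etaOf (p : int) (k : nat) (g : {ffun 'I_k -> 'I_n0.+1}) : int -> 'I_n0.+1 :=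
  fun t => match t - p with
           | Posz m => oapp g ord_max (insub m : option 'I_k)
           | Negz _ => ord_max end.

(* E[ delta_{\varPsi_{p,q}(x)} | sigma(S) ] : since \varPsi_{p,q}(x) depends on S and
   on eta_p..eta_{q-1}, which are i.i.d. with law sum_i alpha_i delta_{e_i} and
   independent of S, the conditional law is obtained by integrating over these. *)
Definition condlaw (alpha : 'I_n0.+1 -> R) (S : int -> int) (p q : int) (x : gpt) : meas :=
  [seq (\prod_(j < absz (q - p)) alpha (g j), Psi S (etaOf p g) p q x)
  | g : {ffun 'I_(absz (q - p)) -> 'I_n0.+1} <- enum {ffun 'I_(absz (q - p)) -> 'I_n0.+1}].

(* "T_{p,x} < q" where T_{p,x} = inf{ r >= p : S_r - S_p = -|x| } *)
Definition Tlt (S : int -> int) (p : int) (x : gpt) (q : int) : bool :=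
  [exists i : 'I_(absz (q - p)), S (p + (i : nat)%:Z) - S p == - (gabs x)%:Z].

End Star.

(* Main.v *)
Require Import Defs.
From HB Require Import structures.
From mathcomp Require Import all_boot all_order all_algebra.
Import Order.TTheory GRing.Theory Num.Theory.
Local Open Scope ring_scope.


Lemma abs_sub_add (p : int) (m : nat) : absz (p + Posz m - p)%R = m.
Proof. by rewrite addrC addKr. Qed.

Lemma add_abs {p q : int} : p <= q -> q = p + Posz (absz (q - p)%R).
Proof. by move=> h; rewrite abszE ger0_norm ?subr_ge0 // addrC subrK. Qed.

Lemma bigmin_recr (x : int) n (F : nat -> int) :
  \big[Num.min/x]_(i < n.+1) F i = Num.min (\big[Num.min/x]_(i < n) F i) (F n).
Proof.
elim: n F => [|n IH] F; first by rewrite (big_ord_recl (op := Num.min)) !big_ord0 minC.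
rewrite (big_ord_recl (op := Num.min)) (eq_bigr (fun i : 'I_n.+1 => F i.+1)); last by move=> i _; rewrite ?lift0.
rewrite (IH (fun i => F i.+1)) [in RHS](big_ord_recl (op := Num.min)) (eq_bigr (fun i : 'I_n => F i.+1)); last by move=> i _; rewrite ?lift0.
by rewrite minA.
Qed.

Lemma smin0 S p : smin S p p = S p.
Proof. by rewrite /smin subrr (bigmin_recr _ 0 (fun i => S (p + Posz i))) big_ord0 addr0 minxx. Qed.

Lemma sminS S p k : smin S p (p + (Posz k.+1)) = Num.min (smin S p (p + (Posz k))) (S (p + (Posz k.+1))).
Proof. by rewrite /smin !abs_sub_add (bigmin_recr _ k.+1 (fun i => S (p + Posz i))). Qed.

Lemma sminK_le S p k j : (j <= k)%N -> smin S p (p + (Posz k)) <= S (p + (Posz j)).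
Proof.
elim: k => [|k IH] hj.
  by move: hj; rewrite leqn0 => /eqP ->; rewrite addr0 smin0.
rewrite sminS ge_min; case: (ltngtP j k.+1) hj => // [hjk _ | -> _].
  by rewrite IH.
by rewrite lexx orbT.
Qed.

Lemma sminK_at S p k : exists2 j, (j <= k)%N & S (p + (Posz j)) = smin S p (p + (Posz k)).
Proof.
elim: k => [|k [j hj IH]]; first by exists 0%N; rewrite // addr0 smin0.
rewrite sminS minEle; case: ifP => _.
  by exists j => //; apply: leqW.
by exists k.+1.
Qed.

Lemma smin_le S p q j : p <= j <= q -> smin S p q <= S j.
Proof.
case/andP=> hpj hjq; rewrite (add_abs (le_trans hpj hjq)) (add_abs hpj).
apply: sminK_le; rewrite -lez_nat !abszE !ger0_norm ?subr_ge0 ?(le_trans hpj hjq) //.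
by rewrite lerD2r.
Qed.

Lemma smin_at S p q : p <= q -> exists2 j, p <= j <= q & S j = smin S p q.
Proof.
move=> hpq; have [j hj e] := sminK_at S p (absz (q - p)%R).
exists (p + (Posz j)); last by rewrite e -add_abs.
rewrite lerDl lez_nat leq0n /= (add_abs hpq) lerD2l lez_nat //.
Qed.


Lemma addSz (p : int) k : p + Posz k + 1 = p + Posz k.+1.
Proof. by rewrite -addrA -[1]/(Posz 1) -PoszD addn1. Qed.

Lemma step_ge {S : int -> int} (Hs : forall t : int, `|S (t + 1) - S t| = 1) t :
  -1 <= S (t + 1) - S t.
Proof. have : `|S (t + 1) - S t| <= 1 by rewrite Hs. by rewrite ler_norml => /andP []. Qed.

Lemma gabs_gmk n0 (i : 'I_n0.+1) m : gabs (gmk i m) = m.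
Proof. by case: m. Qed.

Lemma edir_gmk n0 (i : 'I_n0.+1) m : (0 < m)%N -> edir (gmk i m) = i.
Proof. by case: m. Qed.

Lemma gabs0 n0 (x : gpt n0) : gabs x = 0%N -> x = None.
Proof. by case: x => // [[]]. Qed.

Lemma gshiftE n0 (x : gpt n0) s : 0 <= Posz (gabs x) + s ->
  gshift x s = gmk (edir x) (absz (Posz (gabs x) + s)).
Proof. by rewrite /gshift; case: (Posz (gabs x) + s). Qed.

Lemma Splus_ge0 S p q : p <= q -> 0 <= Splus S p q.
Proof. by move=> h; rewrite /Splus subr_ge0 smin_le // h lexx. Qed.

Lemma SplusK0 S p : Splus S p (p + Posz 0) = 0.
Proof. by rewrite addr0 /Splus smin0 subrr. Qed.

Lemma SplusS S p k : Splus S p (p + Posz k.+1) =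
  Num.max (Splus S p (p + Posz k) + (S (p + Posz k.+1) - S (p + Posz k))) 0.
Proof.
rewrite /Splus sminS.
set m := smin _ _ _; set b := S (p + Posz k.+1); set a := S _.
have -> : a - m + (b - a) = b - m by rewrite addrC addrA subrK.
case: (leP m b) => h.
  by rewrite max_l // subr_ge0.
by rewrite subrr max_r // subr_le0 ltW.
Qed.

Lemma Splus1 S t : Splus S t (t + 1) = Num.max (S (t + 1) - S t) 0.
Proof.
have := SplusS S t 0; rewrite SplusK0 add0r addr0.
by rewrite -[1]/(Posz 1).
Qed.

Lemma PsiKS n0 S (eta : int -> 'I_n0.+1) p k x :
  PsiK S eta p k.+1 x = Psi1 S eta (p + Posz k) (PsiK S eta p k x).
Proof. by []. Qed.

Lemma gabs_Psi0K n0 S (Hs : forall t : int, `|S (t + 1) - S t| = 1)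
  (eta : int -> 'I_n0.+1) p k :
  Posz (gabs (PsiK S eta p k None)) = Splus S p (p + Posz k).
Proof.
elim: k => [|k IH]; first by rewrite SplusK0.
rewrite PsiKS SplusS -IH.
have hd := step_ge Hs (p + Posz k); rewrite addSz in hd.
case: (PsiK S eta p k None) => [[i h]|] /=.
  have hv : 0 <= Posz h.+1 + (S (p + Posz k.+1) - S (p + Posz k)).
    apply: le_trans (_ : Posz h.+1 + -1 <= _); last by rewrite lerD2l.
    by rewrite -[h.+1]addn1 PoszD addrK.
  rewrite addSz gshiftE /= ?hv //.
  by rewrite gabs_gmk abszE ger0_norm ?max_l.
rewrite gabs_gmk Splus1 addSz add0r abszE ger0_norm //.
by rewrite le_max lexx orbT.
Qed.


Lemma PsiK_add n0 S (eta : int -> 'I_n0.+1) p a b x :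
  PsiK S eta p (a + b) x = PsiK S eta (p + Posz a) b (PsiK S eta p a x).
Proof.
elim: b => [|b IH]; first by rewrite addn0.
by rewrite addnS !PsiKS IH PoszD addrA.
Qed.

Lemma absz_split {p m q : int} : p <= m -> m <= q ->
  absz (q - p) = (absz (m - p) + absz (q - m))%N.
Proof.
move=> h1 h2.
have : Posz (absz (q - p)) = Posz (absz (m - p) + absz (q - m)).
  rewrite PoszD !abszE !ger0_norm ?subr_ge0 ?(le_trans h1 h2) //.
  by rewrite [RHS]addrC addrA subrK.
by case.
Qed.

Lemma Psi_flow {n0} S (eta : int -> 'I_n0.+1) {p m q} x : p <= m -> m <= q ->
  Psi S eta p q x = Psi S eta m q (Psi S eta p m x).
Proof.
move=> h1 h2; rewrite /Psi (absz_split h1 h2) PsiK_add.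
by rewrite -(add_abs h1).
Qed.

Lemma Psi_succ n0 S (eta : int -> 'I_n0.+1) p j x : p <= j ->
  Psi S eta p (j + 1) x = Psi1 S eta j (Psi S eta p j x).
Proof.
move=> h; rewrite (Psi_flow _ _ _ h) ?lerDl //.
by rewrite {1}/Psi (addrC j) addrK /= addr0.
Qed.

Lemma gabs_Psi0 n0 S (Hs : forall t : int, `|S (t + 1) - S t| = 1)
  (eta : int -> 'I_n0.+1) p j : p <= j ->
  Posz (gabs (Psi0 S eta p j)) = Splus S p j.
Proof.
by move=> h; rewrite /Psi0 /Psi gabs_Psi0K // -(add_abs h).
Qed.

Lemma smin_sub S p q a b : p <= a -> a <= b -> b <= q -> smin S p q <= smin S a b.
Proof.
move=> h1 h2 h3; have [j /andP [j1 j2] <-] := smin_at S _ _ h2.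
by apply: smin_le; rewrite (le_trans h1 j1) (le_trans j2 h3).
Qed.

Lemma edir_gshift n0 (x : gpt n0) s : (0 < gabs (gshift x s))%N ->
  edir (gshift x s) = edir x.
Proof.
rewrite /gshift; case: (Posz (gabs x) + s) => // m.
by rewrite gabs_gmk => hm; rewrite edir_gmk.
Qed.

Lemma part_ii n0 S (Hs : forall t : int, `|S (t + 1) - S t| = 1)
  (eta : int -> 'I_n0.+1) (p n q : int) : p < n -> n < q ->
     (smin S p q = smin S n q -> etapq S eta p q = etapq S eta n q)
     /\ (smin S p n = smin S p q ->
         (forall j : int, n <= j <= q -> 0 < Splus S p j) ->
         etapq S eta p n = etapq S eta p q).
Proof.
move=> hpn hnq; have hpn' := ltW hpn; have hnq' := ltW hnq.
split.
  move=> hm; have [j /andP [j1 j2] hj] := smin_at S _ _ hnq'.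
  have hpj := le_trans hpn' j1.
  have Z1 : Psi0 S eta n j = None.
    apply: gabs0; apply/eqP; rewrite -eqz_nat gabs_Psi0 //.
    rewrite /Splus subr_eq0 eq_le smin_le ?j1 ?lexx //= hj smin_sub ?lexx //.
  have Z2 : Psi0 S eta p j = None.
    apply: gabs0; apply/eqP; rewrite -eqz_nat gabs_Psi0 //.
    rewrite /Splus subr_eq0 eq_le smin_le ?hpj ?lexx //= hj -hm smin_sub ?lexx //.
  rewrite /etapq /Psi0 (Psi_flow _ _ _ hpj j2) (Psi_flow _ _ _ j1 j2).
  by rewrite -!/(Psi0 _ _ _ _) Z1 Z2.
move=> _ hpos.
suff H : forall k : nat, (k <= absz (q - n))%N ->
    edir (Psi0 S eta p (n + Posz k)) = edir (Psi0 S eta p n).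
  by rewrite /etapq; move: (H (absz (q - n)%R) (leqnn _)); rewrite -(add_abs hnq') => ->.
elim=> [|k IH] hk; first by rewrite addr0.
have hk' : (k <= absz (q - n))%N by apply: ltnW.
have hnk : n <= n + Posz k by rewrite lerDl.
have hkq : n + Posz k.+1 <= q.
  by rewrite [X in _ <= X](add_abs hnq') lerD2l lez_nat.
have hkq' : n + Posz k <= q by apply: le_trans hkq; rewrite lerD2l lez_nat.
rewrite -IH // -addSz /Psi0 Psi_succ ?(le_trans hpn' hnk) //.
have hz : (0 < gabs (Psi0 S eta p (n + Posz k)))%N.
  by rewrite -ltz_nat gabs_Psi0 ?(le_trans hpn' hnk) // hpos // hnk hkq'.
have hz' : (0 < gabs (Psi0 S eta p (n + Posz k + 1)))%N.
  rewrite -ltz_nat gabs_Psi0 ?addSz ?hpos ?hkq ?andbT //.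
    by apply: le_trans hnk _; rewrite lerD2l lez_nat.
  by apply: (le_trans hpn'); rewrite lerDl.
move: hz'; rewrite /Psi0 Psi_succ ?(le_trans hpn' hnk) //.
rewrite -/(Psi0 _ _ _ _); move: hz.
case: (Psi0 S eta p (n + Posz k)) => // z _ /=.
exact: edir_gshift.
Qed.

Set Implicit Arguments. Unset Strict Implicit.

Definition hitb n0 (S : int -> int) (p : int) (x : gpt n0) (k : nat) : bool :=
  [exists i : 'I_k, S (p + Posz i) - S p == - Posz (gabs x)].

Lemma exists_ordS (P : nat -> bool) k :
  [exists i : 'I_k.+1, P i] = [exists i : 'I_k, P i] || P k.
Proof.
apply/idP/idP.
  case/existsP => i hi; case: (ltnP i k) => h.
    by apply/orP; left; apply/existsP; exists (Ordinal h).
  have -> : k = i by apply/eqP; rewrite eqn_leq h -ltnS ltn_ord.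
  by rewrite hi orbT.
case/orP => [/existsP [i hi] | hk]; apply/existsP.
  by exists (widen_ord (leqnSn k) i).
by exists ord_max.
Qed.

Lemma hit0 n0 S p (x : gpt n0) : hitb S p x 0 = false.
Proof. by apply/existsP => [[[]]]. Qed.

Lemma hitS n0 S p (x : gpt n0) k :
  hitb S p x k.+1 = hitb S p x k || (S (p + Posz k) - S p == - Posz (gabs x)).
Proof. exact: (exists_ordS (fun i => S (p + Posz i) - S p == - Posz (gabs x))). Qed.

Lemma aux_pos (a d : int) : 0 < a -> -1 <= d -> 0 <= a + d.
Proof.
move=> h hd; rewrite -lezD1 add0r in h.
by have := lerD h hd; rewrite addrN.
Qed.

Lemma Dsum (S : int -> int) (p : int) k :
  S (p + Posz k) - S p + (S (p + Posz k.+1) - S (p + Posz k)) = S (p + Posz k.+1) - S p.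
Proof. by rewrite [LHS]addrC addrA subrK. Qed.

Lemma pos_of n0 (x : gpt n0) (a : int) : 0 <= Posz (gabs x) + a -> a != - Posz (gabs x) ->
  0 < Posz (gabs x) + a.
Proof. by move=> h1 h2; rewrite lt_def h1 andbT addrC addr_eq0. Qed.

Lemma bound n0 S (Hs : forall t : int, `|S (t + 1) - S t| = 1) p (x : gpt n0) k :
  ~~ hitb S p x k -> forall j, (j <= k)%N -> 0 <= Posz (gabs x) + (S (p + Posz j) - S p).
Proof.
elim: k => [|k IH].
  by move=> _ j; rewrite leqn0 => /eqP ->; rewrite addr0 subrr addr0.
rewrite hitS negb_or => /andP [hk he] j; rewrite leq_eqVlt ltnS => /orP [/eqP ->|hj].
  rewrite -Dsum addrA; apply: aux_pos; first by apply: pos_of => //; apply: IH.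
  by have := step_ge Hs (p + Posz k); rewrite addSz.
exact: IH.
Qed.

Lemma zero_s n0 S (Hs : forall t : int, `|S (t + 1) - S t| = 1) p (x : gpt n0) k :
  ~~ hitb S p x k -> S (p + Posz k) - S p = - Posz (gabs x) -> Splus S p (p + Posz k) = 0.
Proof.
move=> hk he; have [j hj ej] := sminK_at S p k.
rewrite /Splus; apply/eqP; rewrite subr_eq0 eq_le sminK_le //= -ej.
rewrite -(lerD2r (- S p)) he -subr_ge0 opprK addrC.
by rewrite andbT (bound Hs hk hj).
Qed.

Lemma gshift0 n0 (x : gpt n0) : gshift x 0 = x.
Proof. by case: x => [[i h]|]; rewrite /gshift addr0. Qed.

Lemma gshift_neg n0 (x : gpt n0) s : Posz (gabs x) + s = 0 -> gshift x s = None.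
Proof. by rewrite /gshift => ->. Qed.

Lemma gshift_gshift n0 (x : gpt n0) a b : 0 < Posz (gabs x) + a ->
  gshift (gshift x a) b = gshift x (a + b).
Proof.
move=> h; have hm : (0 < absz (Posz (gabs x) + a)%R)%N.
  by rewrite -ltz_nat abszE gtr0_norm.
rewrite (@gshiftE _ x a (ltW h)) /gshift gabs_gmk edir_gmk // abszE gtr0_norm //.
by rewrite addrA.
Qed.

Lemma Psi1_gshift n0 S (eta : int -> 'I_n0.+1) t (x : gpt n0) a : 0 < Posz (gabs x) + a ->
  Psi1 S eta t (gshift x a) = gshift x (a + (S (t + 1) - S t)).
Proof.
move=> h; rewrite -gshift_gshift //.
have : (0 < gabs (gshift x a))%N.
  by rewrite (@gshiftE _ x a (ltW h)) gabs_gmk -ltz_nat abszE gtr0_norm.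
by case: (gshift x a).
Qed.

Lemma PsiK_x n0 S (Hs : forall t : int, `|S (t + 1) - S t| = 1) (eta : int -> 'I_n0.+1)
  p (x : gpt n0) k :
  (~~ hitb S p x k -> PsiK S eta p k x = gshift x (S (p + Posz k) - S p))
  /\ (hitb S p x k -> PsiK S eta p k x = PsiK S eta p k None).
Proof.
elim: k => [|k [IH1 IH2]].
  by rewrite hit0; split => // _; rewrite addr0 subrr gshift0.
rewrite hitS; case hk: (hitb S p x k); rewrite ?orTb ?orFb.
  by split => // _; rewrite !PsiKS IH2.
have hb := bound Hs (negbT hk); have e := IH1 (negbT hk).
case he: (S (p + Posz k) - S p == - Posz (gabs x)); rewrite ?orTb ?orFb.
  split => // _; rewrite !PsiKS e gshift_neg; last first.
    by rewrite (eqP he) addrN.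
  have -> : PsiK S eta p k None = None.
    apply: gabs0; apply/eqP; rewrite -eqz_nat gabs_Psi0K // (zero_s Hs (negbT hk)) //.
    exact/eqP.
  by [].
split => // _; rewrite PsiKS e Psi1_gshift.
  by rewrite addSz Dsum.
by apply: pos_of (negbT he); apply: hb.
Qed.

Set Implicit Arguments. Unset Strict Implicit.

Section M.
Variable (n0 : nat) (R : realFieldType) (alpha : 'I_n0.+1 -> R).

Definition Lint (m : meas n0 R) (f : gpt n0 -> R) : R := \sum_(a <- m) a.1 * f a.2.

Lemma mass_Lint m y : mass m y = Lint m (fun z => (z == y)%:R).
Proof.
rewrite /mass /Lint big_mkcond; apply: eq_bigr => a _.
by case: eqP => _; rewrite ?mulr1 ?mulr0.
Qed.

Lemma Lint_mbind m K f : Lint (mbind m K) f = Lint m (fun z => Lint (K z) f).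
Proof.
rewrite /Lint /mbind big_flatten big_map; apply: eq_bigr => a _.
rewrite big_map big_distrr; apply: eq_bigr => b _ /=.
by rewrite mulrA.
Qed.

Lemma Lint_K1_None S t f : Lint (K1 alpha S t None) f =
  \sum_i alpha i * f (gmk i (absz (Splus S t (t + 1)))).
Proof. by rewrite /Lint /K1 big_map big_enum. Qed.

Lemma Lint_K1_pos S t (z : gpt n0) f : (0 < gabs z)%N ->
  Lint (K1 alpha S t z) f = f (gshift z (S (t + 1) - S t)).
Proof. by case: z => // a _; rewrite /Lint /K1 big_cons big_nil mul1r addr0. Qed.

End M.

Set Implicit Arguments. Unset Strict Implicit.

Section M.
Variable (n0 : nat) (R : realFieldType) (alpha : 'I_n0.+1 -> R).
Hypothesis alpha_sum : \sum_i alpha i = 1.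
Variable (S : int -> int).
Hypothesis Hs : forall t : int, `|S (t + 1) - S t| = 1.
Variable (p : int) (x : gpt n0).

Definition Eexp k (f : gpt n0 -> R) : R :=
  if hitb S p x k then \sum_i alpha i * f (gmk i (absz (Splus S p (p + Posz k))))
  else f (gshift x (S (p + Posz k) - S p)).

Lemma sum_const (c : R) : \sum_i alpha i * c = c.
Proof. by rewrite -big_distrl /= alpha_sum mul1r. Qed.

Lemma Splus_step k : Splus S (p + Posz k) (p + Posz k + 1) =
  Num.max (S (p + Posz k.+1) - S (p + Posz k)) 0.
Proof. by rewrite Splus1 addSz. Qed.

Lemma Lint_KK k f : Lint (KK alpha S p k x) f = Eexp k f.
Proof.
elim: k f => [|k IH] f.
  by rewrite /Eexp hit0 /Lint big_cons big_nil mul1r addr0 addr0 subrr gshift0.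
rewrite /= Lint_mbind IH /Eexp hitS.
have hd := step_ge Hs (p + Posz k); rewrite addSz in hd.
have hs0 : 0 <= Splus S p (p + Posz k) by apply: Splus_ge0; rewrite lerDl.
case hk: (hitb S p x k); rewrite ?orTb ?orFb.
  case hm: (absz (Splus S p (p + Posz k))) => [|m].
    have e0 : Splus S p (p + Posz k) = 0 by apply/eqP; rewrite -absz_eq0 hm.
    rewrite (eq_bigr (fun i => alpha i * Lint (K1 alpha S (p + Posz k) None) f)) // sum_const Lint_K1_None; apply: eq_bigr => i _.
    by rewrite Splus_step SplusS e0 add0r.
  apply: eq_bigr => i _; rewrite Lint_K1_pos // addSz.
  have em : Splus S p (p + Posz k) = Posz m.+1 by rewrite -hm abszE ger0_norm.
  have hv : 0 <= Posz m.+1 + (S (p + Posz k.+1) - S (p + Posz k)).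
    by apply: aux_pos.
  by rewrite gshiftE //= SplusS em max_l.
have hb := bound Hs (negbT hk) (leqnn k).
case he: (S (p + Posz k) - S p == - Posz (gabs x)); rewrite ?orTb ?orFb.
  rewrite gshift_neg; last by rewrite (eqP he) addrN.
  rewrite Lint_K1_None; apply: eq_bigr => i _.
  by rewrite Splus_step SplusS (zero_s Hs (negbT hk) (eqP he)) add0r.
have hp : 0 < Posz (gabs x) + (S (p + Posz k) - S p) by apply: pos_of; rewrite ?he.
rewrite Lint_K1_pos; last first.
  by rewrite (@gshiftE _ _ _ hb) gabs_gmk -ltz_nat abszE gtr0_norm.
by rewrite gshift_gshift // addSz Dsum.
Qed.

End M.

Set Implicit Arguments. Unset Strict Implicit.

Section M.
Variable (n0 : nat) (R : realFieldType) (alpha : 'I_n0.+1 -> R).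
Hypothesis alpha_sum : \sum_i alpha i = 1.
Variable (S : int -> int).
Hypothesis Hs : forall t : int, `|S (t + 1) - S t| = 1.
Variable (p : int).

Lemma L_exists k : exists L : 'I_k.+1, forall eta : int -> 'I_n0.+1,
  PsiK S eta p k.+1 None = gmk (eta (p + Posz L)) (absz (Splus S p (p + Posz k.+1))).
Proof.
elim: k => [|k [L HL]].
  exists ord0 => eta; rewrite PsiKS /= addSz.
  by have -> : p + Posz 0 = p by rewrite addr0.
have hd := step_ge Hs (p + Posz k.+1); rewrite addSz in hd.
have hs0 : 0 <= Splus S p (p + Posz k.+1) by apply: Splus_ge0; rewrite lerDl.
case hm: (absz (Splus S p (p + Posz k.+1))) => [|m].
  have e0 : Splus S p (p + Posz k.+1) = 0 by apply/eqP; rewrite -absz_eq0 hm.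
  exists ord_max => eta; rewrite PsiKS HL hm /=.
  by rewrite Splus_step SplusS e0 add0r.
have em : Splus S p (p + Posz k.+1) = Posz m.+1 by rewrite -hm abszE ger0_norm.
have hv : 0 <= Posz m.+1 + (S (p + Posz k.+2) - S (p + Posz k.+1)) by apply: aux_pos.
exists (widen_ord (leqnSn _) L) => eta; rewrite PsiKS HL hm /= addSz.
by rewrite gshiftE //= SplusS em max_l.
Qed.

Lemma etaOfE k (g : {ffun 'I_k -> 'I_n0.+1}) (L : 'I_k) : etaOf p g (p + Posz L) = g L.
Proof.
rewrite /etaOf; have -> : p + Posz L - p = Posz L by rewrite addrC addKr.
by rewrite valK.
Qed.

Lemma prod_sum1 k : \sum_(g : {ffun 'I_k -> 'I_n0.+1}) \prod_(j < k) alpha (g j) = 1.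
Proof. by rewrite -(bigA_distr_bigA (fun (j : 'I_k) (i : 'I_n0.+1) => alpha i)) /= big1 // => j _; rewrite alpha_sum. Qed.

Lemma sum_cond (x : gpt n0) k f :
  \sum_(g : {ffun 'I_k -> 'I_n0.+1}) (\prod_(j < k) alpha (g j)) * f (PsiK S (etaOf p g) p k x)
  = Eexp alpha S p x k f.
Proof.
rewrite /Eexp; case hk: (hitb S p x k); last first.
  rewrite (eq_bigr (fun g : {ffun _ -> _} => (\prod_(j < k) alpha (g j)) * f (gshift x (S (p + Posz k) - S p)))).
    by rewrite -big_distrl /= prod_sum1 mul1r.
  by move=> g _; rewrite (proj1 (PsiK_x Hs _ p x k)) ?hk.
case: k hk => [|k] hk; first by rewrite hit0 in hk.
have [L HL] := L_exists k.
set m := absz _.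
pose F (j : 'I_k.+1) (i : 'I_n0.+1) := if j == L then alpha i * f (gmk i m) else alpha i.
rewrite (eq_bigr (fun g : {ffun _ -> _} => \prod_(j < k.+1) F j (g j))); last first.
  move=> g _; rewrite (proj2 (PsiK_x Hs _ p x k.+1)) ?hk // HL etaOfE.
  rewrite (bigD1 L) //= [RHS](bigD1 L) //= /F eqxx mulrAC; congr (_ * _).
  by apply: eq_bigr => j /negbTE ->.
rewrite -(bigA_distr_bigA F) /= (bigD1 L) //= [X in _ * X]big1 ?mulr1.
  by apply: eq_bigr => i _; rewrite /F eqxx.
by move=> j /negbTE hj; rewrite /F (eq_bigr (fun i => alpha i)) ?alpha_sum // => i _; rewrite hj.
Qed.

End M.

Unset Implicit Arguments. Set Strict Implicit.

Theorem proposition3 (n0 : nat) (R : realFieldType) (alpha : 'I_n0.+1 -> R)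
  (alpha_pos : forall i, 0 < alpha i) (alpha_sum : \sum_i alpha i = 1)
  (S : int -> int) (S0 : S 0 = 0)
  (Sstep : forall t : int, `|S (t + 1) - S t| = 1)
  (eta : int -> 'I_n0.+1) :
  (* (i) *)
  (forall p n : int, p <= n -> (gabs (Psi0 S eta p n))%:Z = Splus S p n)
  /\
  (* (ii) *)
  (forall p n q : int, p < n -> n < q ->
     (smin S p q = smin S n q -> etapq S eta p q = etapq S eta n q)
     /\ (smin S p n = smin S p q ->
         (forall j : int, n <= j <= q -> 0 < Splus S p j) ->
         etapq S eta p n = etapq S eta p q))
  /\
  (* (iii) *)
  (forall (p n : int) (x : gpt n0), p <= n ->
     Psi S eta p n x =
       (if ~~ Tlt S p x n then gshift x (S n - S p) else Psi0 S eta p n)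
     /\ (forall y : gpt n0,
          mass (Kpq alpha S p n x) y = mass (condlaw alpha S p n x) y
          /\ mass (condlaw alpha S p n x) y =
             mass (if ~~ Tlt S p x n then [:: (1, gshift x (S n - S p))]
                   else [seq (alpha i, gmk i (absz (Splus S p n))) | i <- enum 'I_n0.+1]) y)).
Proof.
split; first by move=> p n h; rewrite gabs_Psi0.
split; first by move=> p n q; apply: part_ii.
move=> p n x hpn; have hn := add_abs hpn.
rewrite /Psi0 /Kpq /condlaw /Psi /Tlt.
move: (absz (n - p)%R) hn => k hn; rewrite hn.
rewrite -/(hitb S p x k).
split.
  case hk: (hitb S p x k) => /=.
    by rewrite (proj2 (PsiK_x Sstep _ p x k)) ?hk.
  by rewrite (proj1 (PsiK_x Sstep _ p x k)) ?hk.
move=> y; rewrite !mass_Lint (Lint_KK alpha_sum Sstep).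
rewrite {1 2}/Lint big_map big_enum /= (eq_bigl xpredT); last by [].
rewrite (sum_cond alpha_sum Sstep p x k (fun z => (z == y)%:R)).
split => //.
rewrite /Eexp; case: (hitb S p x k) => /=.
  by rewrite /Lint big_map big_enum.
by rewrite /Lint big_cons big_nil mul1r addr0.
Qed.
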